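(* Let $Z=\{z_1,\dots,z_n\}$, $z_i=(y_i',x_i')'$, $y_i\in\mathbb{R}^q$, $x_i\in\mathbb{R}^p$, satisfy the multivariate linear model $y_i=B_0'x_i+u_i$, and let $\rho_0$ be a $\rho$-function. Let $(\tilde B_n,\tilde\Sigma_n)$ be estimates (functions of the sample) with values in $\mathbb{R}^{p\times q}\times\mathcal{S}_q$ and let $\hat\sigma_n=s\big(d_1(\tilde B_n,\tilde\Sigma_n),\dots,d_n(\tilde B_n,\tilde\Sigma_n)\big)$ be the M-scale of the Mahalanobis norms of the residuals. Then the explosion breakdown point of $\hat\sigma_n$ is bounded below by $\min(\varepsilon^*_n(Z,\tilde B_n,\tilde\Sigma_n),\,0.5)$.
   Context: $\mathcal{S}_q$ is the set of positive definite symmetric $q\times q$ matrices. A $\rho$-function is a continuous nondecreasing function of $|u|$ with $\rho(0)=0$, $\sup\rho=1$, strictly increasing on nonnegative $u$ with $\rho(u)<1$. $d_i(B,\Sigma)=((y_i-B'x_i)'\Sigma^{-1}(y_i-B'x_i))^{1/2}$. The M-scale $s(v)$ of $v=(v_1,\dots,v_n)$ solves $\frac1n\sum_i\rho_0(v_i/s)=0.5$ (or $s=0$ if at least half the $v_i$ are zero). Let $\mathcal{Z}_m$ be the set of samples $Z^*=\{z_1^*,\dots,z_n^*\}$ with $\#\{i:z_i=z_i^*\}\ge n-m$. The explosion breakdown point of $\hat\sigma_n$ is $m^*/n$ with $m^*=\min\{m:\sup_{Z^*\in\mathcal{Z}_m}\hat\sigma_n(Z^* )=\infty\}$. For $(\tilde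 B,\tilde\Sigma)$: $\varepsilon^*(Z,\tilde B)=m^*/n$ with $m^*=\min\{m:\sup_{Z^*\in\mathcal{Z}_m}\|\tilde B(Z^* )\|_2=\infty\}$ (Frobenius norm); $\varepsilon^*(Z,\tilde\Sigma)=m^*/n$ with $m^*=\min\{m:1/\inf_{Z^*\in\mathcal{Z}_m}\lambda_q(\tilde\Sigma(Z^* ))+\sup_{Z^*\in\mathcal{Z}_m}\lambda_1(\tilde\Sigma(Z^* ))=\infty\}$, $\lambda_1,\lambda_q$ the largest and smallest eigenvalues; $\varepsilon^*_n(Z,\tilde B,\tilde\Sigma)=\min\{\varepsilon^*(Z,\tilde B),\varepsilon^*(Z,\tilde\Sigma)\}$. *)

(* Defs.v *)
From HB Require Import structures.
From mathcomp Require Import all_boot all_order all_algebra.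
From mathcomp Require Import all_classical all_reals all_analysis.
Set Implicit Arguments. Unset Strict Implicit. Unset Printing Implicit Defensive.
Import Order.TTheory GRing.Theory Num.Theory.
Import numFieldNormedType.Exports.
Local Open Scope ring_scope.
Local Open Scope classical_set_scope.

Definition rho_function (R : realType) (rho : R -> R) : Prop :=
  continuous rho /\
  (forall u, rho u = rho `|u|) /\
  (forall u v, 0 <= u -> u <= v -> rho u <= rho v) /\
  rho 0 = 0 /\
  ereal_sup [set (rho u)%:E | u in [set: R]] = 1%:E /\
  (forall u v, 0 <= u -> u < v -> rho v < 1 -> rho u < rho v).

Definition posdef (R : realType) (q : nat) (S : 'M[R]_q) : Prop :=
  S^T = S /\ forall v : 'rV[R]_q, v != 0 -> 0 < (v *m S *m v^T) 0 0.

Definition Mscale (R : realType) (rho : R -> R) (n : nat) (v : 'I_n -> R) : R :=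
  if (n <= 2 * #|[pred i | v i == 0%R]|)%N then 0
  else xget 0 [set s : R | 0 < s /\
                 (n%:R)^-1 * (\sum_(i < n) rho (v i / s)) = 2^-1].

Definition sample (R : realType) (n p q : nat) := 'I_n -> 'cV[R]_q * 'cV[R]_p.

Definition mahal_dist (R : realType) (p q : nat) (B : 'M[R]_(p, q)) (S : 'M[R]_q)
  (z : 'cV[R]_q * 'cV[R]_p) : R :=
  let r := z.1 - B^T *m z.2 in Num.sqrt ((r^T *m invmx S *m r) 0 0).

Definition Zset (R : realType) (n p q : nat) (Z : sample R n p q) (m : nat)
  : set (sample R n p q) :=
  [set Z' | (n - m <= #|[pred i | Z i == Z' i]|)%N].

Definition frob (R : realType) (p q : nat) (B : 'M[R]_(p, q)) : R :=
  Num.sqrt (\sum_(i < p) \sum_(j < q) B i j ^+ 2).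

Definition lambda_max (R : realType) (q : nat) (S : 'M[R]_q) : \bar R :=
  ereal_sup [set a%:E | a in [set a : R | eigenvalue S a]].
Definition lambda_min (R : realType) (q : nat) (S : 'M[R]_q) : \bar R :=
  ereal_inf [set a%:E | a in [set a : R | eigenvalue S a]].

(* breakdown point m*/n, with m* the least m with the explosion property
   (+oo if there is no such m) *)
Definition bdp (R : realType) (n : nat) (expl : nat -> Prop) : \bar R :=
  ereal_inf [set (m%:R / n%:R : R)%:E | m in expl].

Definition explodes_scale (R : realType) (n p q : nat) (Z : sample R n p q)
  (sig : sample R n p q -> R) (m : nat) : Prop :=
  ereal_sup [set (sig Z')%:E | Z' in Zset Z m] = +oo%E.

Definition explodes_B (R : realType) (n p q : nat) (Z : sample R n p q)
  (Bt : sample R n p q -> 'M[R]_(p, q)) (m : nat) : Prop :=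
  ereal_sup [set (frob (Bt Z'))%:E | Z' in Zset Z m] = +oo%E.

(* 1 / inf lambda_q + sup lambda_1 = oo; since eigenvalues of matrices in S_q
   are positive, this means inf lambda_q = 0 or sup lambda_1 = +oo *)
Definition explodes_Sigma (R : realType) (n p q : nat) (Z : sample R n p q)
  (St : sample R n p q -> 'M[R]_q) (m : nat) : Prop :=
  ereal_inf [set lambda_min (St Z') | Z' in Zset Z m] = 0%E \/
  ereal_sup [set lambda_max (St Z') | Z' in Zset Z m] = +oo%E.

(* Main.v *)
Require Import Defs.
From HB Require Import structures.
From mathcomp Require Import all_boot all_order all_algebra.
From mathcomp Require Import all_classical all_reals all_analysis.
From mathcomp Require Import sesquilinear spectral.
From mathcomp.real_closed Require Import complex.
From mathcomp Require Import ring lra zify.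
Set Implicit Arguments. Unset Strict Implicit. Unset Printing Implicit Defensive.
Import Order.TTheory GRing.Theory Num.Theory.
Import numFieldNormedType.Exports.
Local Open Scope ring_scope.
Local Open Scope classical_set_scope.

Module KeyLemma.
Local Open Scope sesquilinear_scope.
Section KL.
Variable R : rcfType.
Local Notation C := (R[i]).
Local Notation f := (real_complex R).

Lemma conjf (x : R) : Num.conj (f x) = f x.
Proof. by apply: conj_Creal; apply/complex_realP; exists x. Qed.

Lemma KL q (S : 'M[R]_q) (l : R) :
  S^T = S -> 0 < l -> (forall a, eigenvalue S a -> l <= a) ->
  forall r : 'cV[R]_q, l * (r^T *m invmx S *m r) 0 0 <= (r^T *m r) 0 0.
Proof.
move=> Ssym l0 Seig r.
pose Sc := map_mx f S.
have Sch : Sc \is hermsymmx.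
  apply/is_hermitianmxP; rewrite expr0 scale1r; apply/matrixP => i j.
  by rewrite !mxE conjf -[in LHS]Ssym mxE.
have /orthomx_spectralP Sdec := hermitian_normalmx Sch.
set P := spectralmx Sc in Sdec; set d := spectral_diag Sc in Sdec.
have Pu : P \is unitarymx by apply: spectral_unitarymx.
have dr := hermitian_spectral_diag_real Sch.
rewrite invmx_unitary // in Sdec.
have PPt : P *m P^t* = 1%:M by apply/unitarymxP.
have PtP : P^t* *m P = 1%:M by rewrite -invmx_unitary // mulVmx // unitarymx_unit.
have deig : forall i, exists2 x, d 0 i = f x & l <= x.
  move=> i; have /mxOverP/(_ 0 i) dri := dr.
  set x := complex.Re (d 0 i).
  have hx : d 0 i = f x by rewrite /x RRe_real.
  exists x => //; apply: Seig.
  have ev : eigenvalue Sc (d 0 i).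
    apply/eigenvalueP; exists (row i P).
      rewrite -row_mul Sdec !mulmxA PPt mul1mx mul_diag_mx.
      by apply/rowP => j; rewrite !mxE.
    apply/eqP => h0.
    have Pik : forall k, P i k = 0.
      by move=> k; have := congr1 (fun v : 'rV[C]_q => v 0 k) h0; rewrite !mxE.
    have := congr1 (fun M : 'M[C]_q => M i i) PPt; rewrite /= !mxE big1 ?eqxx.
      by move/eqP; rewrite eq_sym oner_eq0.
    by move=> k _; rewrite Pik mul0r.
  move: ev; rewrite hx !eigenvalue_root_char -map_char_poly.
  by rewrite fmorph_root.
pose e := \row_j (d 0 j)^-1.
have dnz : forall j, d 0 j != 0.
  move=> j; have [x -> lx] := deig j.
  apply/eqP => /(congr1 (@complex.Re R)) /= x0.
  by move: (lt_le_trans l0 lx); rewrite x0 ltxx.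
have hinv : invmx Sc = P^t* *m diag_mx e *m P.
  have h1 : Sc *m (P^t* *m diag_mx e *m P) = 1%:M.
    rewrite Sdec !mulmxA -[P ^t* *m _ *m _ *m _]mulmxA PPt mulmx1.
    rewrite -[P ^t* *m diag_mx d *m diag_mx e]mulmxA.
    have -> : diag_mx d *m diag_mx e = 1%:M.
      apply/matrixP => a b; rewrite mul_diag_mx !mxE.
      by case: (a == b) => /=; rewrite ?mulr0 ?mulr1n ?mulfV.
    by rewrite mulmx1.
  have [Su _] := mulmx1_unit h1.
  by rewrite -[LHS]mulmx1 -h1 mulmxA mulVmx // mul1mx.
rewrite -lecR rmorphM /=.
set rc := map_mx f r.
have eQ : ((r^T *m invmx S *m r) 0 0)%:C%C = (rc^T *m invmx Sc *m rc) 0 0.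
  by rewrite /rc /Sc map_trmx -map_invmx -!map_mxM [RHS]mxE.
have eN : ((r^T *m r) 0 0)%:C%C = (rc^T *m rc) 0 0.
  by rewrite /rc map_trmx -!map_mxM [RHS]mxE.
rewrite eQ eN hinv.
set w := P *m rc.
have rcw : rc^T *m P^t* = w^t*.
  rewrite /w trmx_mul map_mxM; congr (_ *m _).
  by apply/matrixP => a b; rewrite !mxE; apply/esym/conjf.
have -> : rc^T *m (P^t* *m diag_mx e *m P) *m rc = w^t* *m diag_mx e *m w.
  by rewrite -rcw /w !mulmxA.
have -> : rc^T *m rc = w^t* *m w.
  by rewrite -rcw /w mulmxA -[rc^T *m _ *m P]mulmxA PtP mulmx1.
have key : forall k, l%:C%C * (w^t* 0 k * e 0 k * w k 0) <= w^t* 0 k * w k 0.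
  move=> k.
  have -> : w^t* 0 k = (w k 0)^* by rewrite !mxE.
  have -> : e 0 k = (d 0 k)^-1 by rewrite mxE.
  have [x dx lx] := deig k.
  rewrite dx.
  set a := (w k 0).
  have -> : l%:C%C * ((a^* * (x%:C%C)^-1) * a) = (l / x)%:C%C * (a^* * a).
    by rewrite rmorphM fmorphV /= !mulrA [l%:C%C * _ * _]mulrAC.
  apply: ler_piMl.
    by have := mul_conjC_ge0 (a^*); rewrite conjCK.
  rewrite -(rmorph1 f) lecR ler_pdivrMr ?mul1r //.
  exact: lt_le_trans l0 lx.
rewrite mul_mx_diag [in X in _ <= X]mxE [in X in _ * X <= _]mxE mulr_sumr.
apply: ler_sum => k _; rewrite mxE; exact: key.
Qed.
End KL.
End KeyLemma.

Lemma rho_ge0 (R : realType) (rho : R -> R) : rho_function rho -> forall u, 0 <= rho u.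
Proof.
move=> [_ [habs [hmon [h0 _]]]] u; rewrite habs -h0; exact: hmon.
Qed.

Lemma rho_le1 (R : realType) (rho : R -> R) : rho_function rho -> forall u, rho u <= 1.
Proof.
move=> [_ [_ [_ [_ [hsup _]]]]] u; rewrite -lee_fin -hsup.
by apply: ereal_sup_ubound; exists u.
Qed.

Lemma rho_small (R : realType) (rho : R -> R) : rho_function rho ->
  forall d : R, 0 < d -> exists2 t0 : R, 0 < t0 & forall t, 0 <= t -> t < t0 -> rho t < d.
Proof.
move=> hr d d0; have hc := hr.1 0.
have : \forall t \near (0:R), `|rho 0 - rho t| < d.
  by move: hc => /cvgrPdist_lt; apply.
move=> /nbhs_ballP [e /= e0 he]; exists e => // t t0 te.
have := he t; rewrite /ball /= sub0r normrN ger0_norm // => /(_ te).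
by rewrite hr.2.2.2.1 sub0r normrN ger0_norm // rho_ge0.
Qed.

Lemma Mscale_bound (R : realType) (rho : R -> R) (n m : nat) :
  rho_function rho -> (0 < n)%N -> (2 * m < n)%N ->
  exists2 c : R, 0 <= c & forall (v : 'I_n -> R) (G : pred 'I_n) (K : R),
    (n - m <= #|G|)%N -> 0 <= K -> (forall i, 0 <= v i) ->
    (forall i, G i -> v i <= K) -> Mscale rho v <= c * K.
Proof.
move=> hr n0 hm.
have n0R : (0 : R) < n%:R by rewrite ltr0n.
pose d : R := (n - 2 * m)%:R / (2 * n%:R).
have d0 : 0 < d by rewrite divr_gt0 ?mulr_gt0 // ltr0n subn_gt0.
have [t0 t00 ht0] := rho_small hr d0.
exists t0^-1; first by rewrite invr_ge0 ltW.
move=> v G K hG K0 v0 vK.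
have cK0 : 0 <= t0^-1 * K by rewrite mulr_ge0 // invr_ge0 ltW.
rewrite /Mscale; case: ifP => _ //.
set P := [set s | _].
case: (pselect (exists s, P s)) => [ex|nex]; last first.
  by rewrite xgetPN // => s Ps; apply: nex; exists s.
have := xgetPex 0 ex; set s := xget 0 P; move=> [s0 seq].
rewrite leNgt; apply/negP => hs.
have Ks : K / s < t0.
  have : t0 * (t0^-1 * K) < t0 * s by rewrite ltr_pM2l.
  by rewrite mulrA mulfV ?gt_eqF // mul1r ltr_pdivrMr // mulrC.
have rK := ht0 _ (divr_ge0 K0 (ltW s0)) Ks.
have hsum : \sum_(i < n) rho (v i / s) = n%:R / 2.
  move/(congr1 (fun x => n%:R * x)): seq; rewrite mulrA mulfV ?gt_eqF // mul1r.
  by move=> ->.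
have hle : \sum_(i < n) rho (v i / s) <= n%:R * rho (K / s) + m%:R.
  rewrite (bigID G) /=; apply: lerD.
    apply: (le_trans (y := \sum_(i < n | G i) rho (K / s))).
      apply: ler_sum => i Gi; apply: hr.2.2.1.
        by rewrite divr_ge0 // ltW.
      by rewrite ler_pM2r ?invr_gt0 // vK.
    rewrite sumr_const mulr_natl.
    rewrite -[_ *+ #|G|]mulr_natr -[_ *+ n]mulr_natr; apply: ler_wpM2l; first exact: rho_ge0.
    rewrite ler_nat; by apply: (leq_trans (max_card _)); rewrite card_ord.
  apply: (le_trans (y := \sum_(i < n | ~~ G i) (1 : R))).
    by apply: ler_sum => i _; apply: rho_le1.
  rewrite sumr_const.
  have hc : #|(fun i : 'I_n => ~~ G i)| = #|[predC G]| by apply: eq_card.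
  have := cardC G; rewrite card_ord ler_nat hc => h.
  by rewrite -(leq_add2l #|G|) h addnC -leq_subLR.
have : n%:R / 2 < n%:R * d + m%:R.
  by rewrite -hsum; apply: (le_lt_trans hle); rewrite ltrD2r ltr_pM2l.
rewrite /d natrB ?(ltnW hm) // natrM.
have -> : n%:R * ((n%:R - 2 * m%:R) / (2 * n%:R)) + m%:R = n%:R / 2 :> R.
  by field; rewrite pnatr_eq0 -lt0n.
by rewrite ltxx.
Qed.

Lemma sup_fin_bound (R : realType) (T : Type) (A : set T) (g : T -> R) :
  ereal_sup [set (g x)%:E | x in A] <> +oo%E -> exists M, forall x, A x -> g x <= M.
Proof.
move=> h.
have ub : forall x, A x -> ((g x)%:E <= ereal_sup [set (g x)%:E | x in A])%E.
  by move=> x Ax; apply: ereal_sup_ubound; exists x.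
move: h ub; case: (ereal_sup _) => [r| |] // _ ub.
  by exists r => x Ax; rewrite -lee_fin ub.
by exists 0 => x Ax; have := ub x Ax; rewrite leeNy_eq.
Qed.

Lemma le_sum1 (R : realType) (I : finType) (F : I -> R) i :
  (forall j, 0 <= F j) -> F i <= \sum_j F j.
Proof.
move=> h; rewrite (bigD1 i) //=; apply: ler_wpDr => //.
by apply: sumr_ge0 => j _.
Qed.

Lemma posdef_eig (R : realType) q (S : 'M[R]_q) a :
  posdef S -> eigenvalue S a -> 0 < a.
Proof.
move=> [_ hpos] /eigenvalueP [v hv vnz].
have := hpos v vnz; rewrite hv -scalemxAl mxE.
move=> h; rewrite ltNge; apply/negP => a0.
move: h; rewrite ltNge => /negP; apply.
apply: mulr_le0_ge0 => //; rewrite mxE; apply: sumr_ge0 => j _.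
by rewrite mxE -expr2 sqr_ge0.
Qed.

Lemma sigma_lb (R : realType) (T : Type) q (A : set T) (St : T -> 'M[R]_q) :
  (forall t, posdef (St t)) ->
  ereal_inf [set lambda_min (St t) | t in A] <> 0%E ->
  exists2 l : R, 0 < l & forall t, A t -> forall a, eigenvalue (St t) a -> l <= a.
Proof.
move=> hpd hne.
set L := ereal_inf _ in hne.
have L0 : (0 <= L)%E.
  apply: le_ereal_inf_tmp => _ [t At <-].
  apply: le_ereal_inf_tmp => _ [a ha <-].
  by rewrite lee_fin ltW // (posdef_eig (hpd t)).
have key : forall t, A t -> forall a, eigenvalue (St t) a -> (L <= a%:E)%E.
  move=> t At a ha; apply: (le_trans (ereal_inf_lbound _)); first by exists t.
  by apply: ereal_inf_lbound; exists a.
move: L0 hne key; case: L => [r| |] //.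
- move=> r0 rne key; exists r.
    by rewrite lt_def -lee_fin r0 andbT; apply/eqP => r0'; apply: rne; rewrite r0'.
  by move=> t At a ha; rewrite -lee_fin (key t At a ha).
- by move=> _ _ key; exists 1 => // t At a ha; have := key t At a ha.
Qed.

Lemma resid_bound (R : realType) p q (B : 'M[R]_(p, q)) (y : 'cV[R]_q) (x : 'cV[R]_p) KB :
  frob B <= KB ->
  ((y - B^T *m x)^T *m (y - B^T *m x)) 0 0 <= \sum_j (`|y j 0| + KB * \sum_k `|x k 0|)^+2.
Proof.
move=> hB.
have Bkj : forall k j, `|B k j| <= KB.
  move=> k j; apply: le_trans hB; rewrite /frob -sqrtr_sqr; apply: ler_wsqrtr.
  apply: (le_trans (y := \sum_j0 B k j0 ^+ 2)).
    by apply: (@le_sum1 _ _ (fun j0 => B k j0 ^+ 2) j) => j0; apply: sqr_ge0.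
  apply: (@le_sum1 _ _ (fun i => \sum_j0 B i j0 ^+ 2) k) => i.
  by apply: sumr_ge0 => j0 _; apply: sqr_ge0.
rewrite mxE; apply: ler_sum => j _.
set r := (y - B^T *m x) j 0.
have hr : `|r| <= `|y j 0| + KB * \sum_k `|x k 0|.
  rewrite /r !mxE (le_trans (ler_normB _ _)) // lerD2l mulr_sumr.
  apply: (le_trans (ler_norm_sum _ _ _)); apply: ler_sum => k _.
  by rewrite !mxE normrM ler_wpM2r.
rewrite mxE -/r (le_trans (ler_norm _)) // normrM expr2.
by apply: ler_pM.
Qed.

Theorem lemma2 (R : realType) (n p q : nat) (Z : sample R n p q)
  (B0 : 'M[R]_(p, q)) (u : 'I_n -> 'cV[R]_q)
  (hmodel : forall i, (Z i).1 = B0^T *m (Z i).2 + u i)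
  (rho0 : R -> R) (hrho : rho_function rho0)
  (Bt : sample R n p q -> 'M[R]_(p, q)) (St : sample R n p q -> 'M[R]_q)
  (hSt : forall Z', posdef (St Z'))
  (hn : (0 < n)%N) (hq : (0 < q)%N) :
  let sigma_hat := fun Z' : sample R n p q =>
    Mscale rho0 (fun i => mahal_dist (Bt Z') (St Z') (Z' i)) in
  (Order.min (Order.min (bdp R n (explodes_B Z Bt)) (bdp R n (explodes_Sigma Z St)))
             (2^-1 : R)%:E
   <= bdp R n (explodes_scale Z sigma_hat))%E.
Proof.
cbv zeta.
have n0R : (0 : R) < n%:R by rewrite ltr0n.
rewrite {3}/bdp; apply: le_ereal_inf_tmp => _ [m hm <-].
case: (leqP n (2 * m)) => hnm.
  rewrite ge_min; apply/orP; right; rewrite lee_fin.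
  rewrite ler_pdivlMr // mulrC ler_pdivrMr // -natrM ler_nat mulnC //.
case: (pselect (explodes_B Z Bt m)) => hB.
  rewrite ge_min; apply/orP; left; rewrite ge_min; apply/orP; left.
  by apply: ereal_inf_lbound; exists m.
case: (pselect (explodes_Sigma Z St m)) => hS.
  rewrite ge_min; apply/orP; left; rewrite ge_min; apply/orP; right.
  by apply: ereal_inf_lbound; exists m.
exfalso.
have [KB hKB] := sup_fin_bound hB.
have [l l0 hl] : exists2 l : R, 0 < l & forall t, Zset Z m t ->
    forall a, eigenvalue (St t) a -> l <= a.
  by apply: sigma_lb => // h0; apply: hS; left.
pose Kc := \sum_i \sum_j (`|(Z i).1 j 0| + KB * \sum_k `|(Z i).2 k 0|)^+2.
have Kc0 : 0 <= Kc by apply: sumr_ge0 => i _; apply: sumr_ge0 => j _; apply: sqr_ge0.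
have [c c0 hc] := Mscale_bound hrho hn hnm.
have bnd : forall Z', Zset Z m Z' -> Mscale rho0 (fun i => mahal_dist (Bt Z') (St Z') (Z' i)) <= c * Num.sqrt (Kc / l).
  move=> Z' hZ'; apply: (hc _ [pred i | Z i == Z' i]) => //.
  - by move=> i; apply: sqrtr_ge0.
  move=> i /= /eqP <-; rewrite /mahal_dist /=; apply: ler_wsqrtr.
  set r := (Z i).1 - (Bt Z')^T *m (Z i).2.
  have hK := KeyLemma.KL (hSt Z').1 l0 (hl Z' hZ') r.
  rewrite ler_pdivlMr // mulrC (le_trans hK) //.
  apply: (le_trans (resid_bound _ _ (hKB Z' hZ'))).
  apply: (@le_sum1 _ _ (fun i => \sum_j (`|(Z i).1 j 0| + KB * \sum_k `|(Z i).2 k 0|)^+2) i).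
  by move=> i0; apply: sumr_ge0 => j _; apply: sqr_ge0.
move: hm; rewrite /explodes_scale; apply/eqP; rewrite eq_le negb_and; apply/orP; right.
rewrite -ltNge; apply: (le_lt_trans (y := (c * Num.sqrt (Kc / l))%:E)).
  by apply: ge_ereal_sup => _ [Z' hZ' <-]; rewrite lee_fin bnd.
exact: ltry.
Qed.
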